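(* Let $$\Gamma=\left\langle\mathbb{Z}^3,\left(0,\begin{pmatrix}1&-1&0\\0&-1&0\\0&0&-1\end{pmatrix}\right)\right\rangle\subseteq\mathrm{Aff}(\mathbb{R}^3).$$ Then $\mathrm{Spec}_R(\Gamma)=4\mathbb{N}\cup\{\infty\}$.
   Context: $\mathrm{Aff}(\mathbb{R}^3)=\mathbb{R}^3\rtimes\mathrm{GL}_3(\mathbb{R})$ with multiplication $(d_1,D_1)(d_2,D_2)=(d_1+D_1d_2,D_1D_2)$; $\mathbb{Z}^3$ denotes $\{(z,I_3)\mid z\in\mathbb{Z}^3\}$. $\mathbb{N}=\{1,2,3,\dots\}$, $4\mathbb{N}=\{4,8,12,\dots\}$. For an automorphism $\varphi$ of a group $G$, $R(\varphi)\in\mathbb{N}\cup\{\infty\}$ is the number of classes of the relation $g\sim g'\iff\exists h\in G: g=hg'\varphi(h)^{-1}$, and $\mathrm{Spec}_R(G)=\{R(\varphi)\mid\varphi\in\mathrm{Aut}(G)\}$. *)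

(* Defs.v *)
From mathcomp Require Import all_boot all_order all_algebra.
From Stdlib Require Import Rdefinitions.
From mathcomp Require Import Rstruct.
Set Implicit Arguments. Unset Strict Implicit. Unset Printing Implicit Defensive.
Import Order.TTheory GRing.Theory Num.Theory.
Local Open Scope ring_scope.

(* Elements of Aff(R^3) = R^3 ⋊ GL_3(R): pairs (d, D), D invertible. *)
Definition aff := ('cV[R]_3 * 'M[R]_3)%type.

Definition is_aff (g : aff) : Prop := g.2 \in unitmx.

Definition aff_mul (g h : aff) : aff := (g.1 + g.2 *m h.1, g.2 *m h.2).
Definition aff_one : aff := (0, 1%:M).
Definition aff_inv (g : aff) : aff := (- (invmx g.2 *m g.1), invmx g.2).

Definition transl (z : 'cV[int]_3) : aff := (map_mx (fun k : int => k%:~R) z, 1%:M).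

(* The matrix [[1,-1,0],[0,-1,0],[0,0,-1]] *)
Definition Amat : 'M[R]_3 :=
  \matrix_(i < 3, j < 3)
    (if (i == 0 :> nat) && (j == 0 :> nat) then 1
     else if (i == 0 :> nat) && (j == 1 :> nat) then -1
     else if (i == j) then -1 else 0).

Definition Agen : aff := (0, Amat).

Inductive Gamma : aff -> Prop :=
  | Gamma_transl (z : 'cV[int]_3) : Gamma (transl z)
  | Gamma_A : Gamma Agen
  | Gamma_mul g h : Gamma g -> Gamma h -> Gamma (aff_mul g h)
  | Gamma_inv g : Gamma g -> Gamma (aff_inv g).

(* φ is an automorphism of Γ (only its restriction to Γ matters). *)
Definition is_aut (phi : aff -> aff) : Prop :=
  (forall g, Gamma g -> Gamma (phi g)) /\
  (forall g h, Gamma g -> Gamma h -> phi (aff_mul g h) = aff_mul (phi g) (phi h)) /\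
  (forall g h, Gamma g -> Gamma h -> phi g = phi h -> g = h) /\
  (forall g', Gamma g' -> exists g, Gamma g /\ phi g = g').

Definition twisted (phi : aff -> aff) (g g' : aff) : Prop :=
  exists h, Gamma h /\ g = aff_mul (aff_mul h g') (aff_inv (phi h)).

Definition reid_classes (phi : aff -> aff) (n : nat) : Prop :=
  exists s : seq aff,
    size s = n /\
    (forall i : nat, (i < n)%nat -> Gamma (nth aff_one s i)) /\
    (forall i j : nat, (i < n)%nat -> (j < n)%nat -> i <> j ->
        ~ twisted phi (nth aff_one s i) (nth aff_one s j)) /\
    (forall g, Gamma g -> exists i : nat, (i < n)%nat /\ twisted phi g (nth aff_one s i)).

(* R(φ) ∈ N ∪ {∞}, encoded as option nat (None = ∞). *)
Definition reidemeister (phi : aff -> aff) (r : option nat) : Prop :=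
  match r with
  | Some n => reid_classes phi n
  | None => forall n, ~ reid_classes phi n
  end.

Definition SpecR_Gamma (r : option nat) : Prop :=
  exists phi, is_aut phi /\ reidemeister phi r.

Definition fourN_inf (r : option nat) : Prop :=
  match r with
  | Some n => (0 < n)%nat /\ dvdn 4 n
  | None => True
  end.

(* Main.v *)
Require Import Defs.
From mathcomp Require Import all_boot all_order all_algebra.
From mathcomp Require Import Rstruct ring lra zify.
From Stdlib Require Import Rdefinitions ClassicalEpsilon.
Set Implicit Arguments. Unset Strict Implicit. Unset Printing Implicit Defensive.
Import Order.TTheory GRing.Theory Num.Theory.
Local Open Scope ring_scope.

Record V := mkV { vp : int; vq : int; vr : int }.
Definition vadd (x y : V) := mkV (vp x + vp y) (vq x + vq y) (vr x + vr y).
Definition vopp x := mkV (- vp x) (- vq x) (- vr x).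
Definition vA x := mkV (vq x) (vp x) (- vr x).
Definition vAb (b : bool) x := if b then vA x else x.
Definition v0 := mkV 0 0 0.

Lemma V_eq x y : vp x = vp y -> vq x = vq y -> vr x = vr y -> x = y.
Proof. by case: x; case: y => /= ??? ??? -> -> ->. Qed.

Definition G := (V * bool)%type.
Definition gmul (x y : G) : G := (vadd x.1 (vAb x.2 y.1), addb x.2 y.2).
Definition ginv (x : G) : G := (vopp (vAb x.2 x.1), x.2).

Definition vecZ (z : V) : 'cV[int]_3 :=
  \col_(i < 3) (if i == 0 :> nat then - vq z else if i == 1 :> nat then vp z - vq z else vr z).
Definition vecR (z : V) : 'cV[R]_3 := map_mx (fun k : int => k%:~R) (vecZ z).
Definition matb (b : bool) : 'M[R]_3 := if b then Amat else 1%:M.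
Definition emb (x : G) : aff := (vecR x.1, matb x.2).

Lemma sum3 (T : nmodType) (F : 'I_3 -> T) : \sum_(k < 3) F k = F 0 + F 1 + F 2%:R.
Proof. rewrite !big_ord_recl big_ord0 addr0 addrA. by congr (_ + _ + _); congr F; apply: val_inj. Qed.

Lemma AmatA : Amat *m Amat = 1%:M.
Proof.
apply/matrixP => i j; rewrite !mxE sum3 !mxE.
by case: i => [[|[|[|i]]]] //= Hi; case: j => [[|[|[|j]]]] //= Hj; ring.
Qed.

Lemma Amat_unit : Amat \in unitmx.
Proof. by case: (mulmx1_unit AmatA). Qed.

Lemma invAmat : invmx Amat = Amat.
Proof.
by rewrite -[invmx Amat]mulmx1 -AmatA mulmxA mulVmx ?mul1mx // Amat_unit.
Qed.

Lemma matb_mul b b' : matb b *m matb b' = matb (addb b b').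
Proof. by case: b; case: b' => /=; rewrite ?mulmx1 ?mul1mx ?AmatA. Qed.

Lemma invmatb b : invmx (matb b) = matb b.
Proof. by case: b => /=; rewrite ?invAmat ?invmx1. Qed.

Lemma vecR_add x y : vecR (vadd x y) = vecR x + vecR y.
Proof.
apply/matrixP => i j; rewrite !mxE.
by case: i => [[|[|[|i]]]] //= Hi; rewrite ?intrD ?intrN ?intrB; ring.
Qed.

Lemma vecR_opp x : vecR (vopp x) = - vecR x.
Proof.
apply/matrixP => i j; rewrite !mxE.
by case: i => [[|[|[|i]]]] //= Hi; rewrite ?intrD ?intrN ?intrB; ring.
Qed.

Lemma matb_vec b z : matb b *m vecR z = vecR (vAb b z).
Proof.
case: b => /=; last by rewrite mul1mx.
apply/matrixP => i j; rewrite !mxE sum3 !mxE.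
by case: i => [[|[|[|i]]]] //= Hi; rewrite ?intrD ?intrN ?intrB; ring.
Qed.

Lemma emb_mul x y : aff_mul (emb x) (emb y) = emb (gmul x y).
Proof.
by rewrite /aff_mul /emb /gmul /= matb_mul matb_vec vecR_add.
Qed.

Lemma emb_inv x : aff_inv (emb x) = emb (ginv x).
Proof.
by rewrite /aff_inv /emb /ginv /= invmatb matb_vec vecR_opp.
Qed.

Lemma vecR_inj x y : vecR x = vecR y -> x = y.
Proof.
move=> /matrixP H.
have H0 := H 0 0; have H1 := H 1 0; have H2 := H 2%:R 0.
rewrite !mxE /= in H0 H1 H2.
move/intr_inj: H0 => H0; move/intr_inj: H1 => H1; move/intr_inj: H2 => H2.
apply: V_eq; lia.
Qed.

Lemma matb_inj b b' : matb b = matb b' -> b = b'.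
Proof.
case: b; case: b' => //= /matrixP H; have := H 1 1; rewrite !mxE /= => E; lra.
Qed.

Lemma emb_inj x y : emb x = emb y -> x = y.
Proof.
case: x => z b; case: y => z' b' [] /vecR_inj -> /matb_inj -> //.
Qed.

Lemma vecR0 : vecR v0 = 0.
Proof. by apply/matrixP => i j; rewrite !mxE; case: i => [[|[|[|i]]]] //= Hi. Qed.

Lemma Gamma_emb x : Gamma (emb x).
Proof.
case: x => z [].
- have -> : ((z, true) : G) = gmul (z, false) (v0, true).
    congr pair; apply: V_eq => /=; ring.
  rewrite -emb_mul; apply: Gamma_mul; first exact: (Gamma_transl (vecZ z)).
  rewrite /emb /= vecR0; exact: Gamma_A.
- exact: (Gamma_transl (vecZ z)).
Qed.

Lemma Gamma_embP g : Gamma g -> exists x, g = emb x.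
Proof.
elim => [z||g1 h1 _ [x ->] _ [y ->]|g1 _ [x ->]].
- exists (mkV (z 1 0 - z 0 0) (- z 0 0) (z 2%:R 0), false).
  rewrite /emb /transl /=; congr pair; apply/matrixP => i j; rewrite !mxE.
  case: i => [[|[|[|i]]]] //= Hi; rewrite (ord1 j).
  + by rewrite opprK; congr (_%:~R); congr (z _ _); exact: val_inj.
  + by rewrite opprK subrK; congr (_%:~R); congr (z _ _); exact: val_inj.
  + by congr (_%:~R); congr (z _ _); exact: val_inj.
- by exists (v0, true); rewrite /emb /= vecR0.
- by exists (gmul x y); rewrite emb_mul.
- by exists (ginv x); rewrite emb_inv.
Qed.

Lemma aut_emb phi (H : is_aut phi) x : exists y, phi (emb x) = emb y.
Proof. case: H => H1 _. by case: (Gamma_embP (H1 _ (Gamma_emb x))) => y ->; exists y. Qed.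

Definition PhiOf phi (H : is_aut phi) (x : G) : G :=
  proj1_sig (constructive_indefinite_description _ (aut_emb H x)).

Lemma PhiOfE phi (H : is_aut phi) x : phi (emb x) = emb (PhiOf H x).
Proof. rewrite /PhiOf; case: constructive_indefinite_description => y //. Qed.

Definition maut (F : G -> G) :=
  (forall x y, F (gmul x y) = gmul (F x) (F y)) /\
  (forall x y, F x = F y -> x = y) /\ (forall y, exists x, F x = y).

Lemma PhiOf_maut phi (H : is_aut phi) : maut (PhiOf H).
Proof.
have H' := H; case: H' => H1 [H2 [H3 H4]]; split; [|split].
- move=> x y; apply: emb_inj; rewrite -(PhiOfE H) -emb_mul -emb_mul -!(PhiOfE H).
  by apply: H2; apply: Gamma_emb.
- move=> x y E; apply: emb_inj; apply: H3; try apply: Gamma_emb.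
  by rewrite !(PhiOfE H) E.
- move=> y; case: (H4 _ (Gamma_emb y)) => g [/Gamma_embP [x ->] Ex].
  by exists x; apply: emb_inj; rewrite -(PhiOfE H).
Qed.

Lemma twistedE phi (H : is_aut phi) x y :
  twisted phi (emb x) (emb y) <-> exists h, x = gmul (gmul h y) (ginv (PhiOf H h)).
Proof.
split.
- case=> g [/Gamma_embP [h ->] E]; exists h; apply: emb_inj.
  by rewrite E (PhiOfE H) emb_inv !emb_mul.
- case=> h E; exists (emb h); split; first exact: Gamma_emb.
  by rewrite (PhiOfE H) emb_inv !emb_mul E.
Qed.

Definition ge : G := (v0, false).
Definition sq (h : G) := gmul h h.

Lemma gmul_e x : gmul x ge = x.
Proof. case: x => z [] /=; rewrite /gmul /= ?addbF; congr pair; apply: V_eq => /=; ring. Qed.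
Lemma ge_mul x : gmul ge x = x.
Proof. case: x => z [] /=; rewrite /gmul /=; congr pair; apply: V_eq => /=; ring. Qed.

Lemma idem_e a : gmul a a = a -> a = ge.
Proof.
case: a => z b; rewrite /gmul /= addbb => [[E1 Eb]]; subst b; rewrite /= in E1.
have := f_equal vp E1; have := f_equal vq E1; have := f_equal vr E1.
case: z {E1} => p q r /= E3 E2 E1; congr pair; apply: V_eq => /=; lia.
Qed.

Lemma trans_char x : x.2 = false <-> forall h, gmul x (sq h) = gmul (sq h) x.
Proof.
split.
- case: x => z b /= ->; case=> w c; rewrite /sq /gmul /= addbb /=; congr pair.
  case: c => /=; apply: V_eq => /=; ring.
- case: x => z [] //= H; have := H (mkV 0 0 1, false).
  rewrite /sq /gmul /= => -[] *; lia.
Qed.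

Definition vscale (k : int) x := mkV (k * vp x) (k * vq x) (k * vr x).

Lemma additive_int (f : int -> V) :
  (forall a b, f (a + b) = vadd (f a) (f b)) -> forall k, f k = vscale k (f 1).
Proof.
move=> Hf.
have f0 : f 0 = v0.
  have := Hf 0 0; rewrite addr0; case: (f 0) => p q r /= [] *; apply: V_eq => /=; lia.
have fn : forall n : nat, f n%:Z = vscale n%:Z (f 1).
  elim => [|n IH]; first by rewrite f0; apply: V_eq => /=; ring.
  rewrite -addn1 PoszD Hf IH; apply: V_eq => /=; ring.
case=> n; first exact: fn.
have := Hf (Negz n) (n.+1%:Z); rewrite NegzE addNr f0 fn.
case: (f (- n.+1%:Z)) => p q r; case: (f 1) => p1 q1 r1 /= [] *.
apply: V_eq => /=; lia.
Qed.

Record params := Params { pa : int; peps : int; pg : int; pdl : int; pe : int; pmu : int; pnu : int }.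

Definition MfP (P : params) z :=
  mkV (pa P * vp z + (peps P - pa P) * vq z + pdl P * vr z)
      ((peps P - pa P) * vp z + pa P * vq z - pdl P * vr z)
      (pg P * vp z - pg P * vq z + pe P * vr z).
Definition dP (P : params) := mkV (pmu P) (- pmu P) (pnu P).
Definition PhiP (P : params) (x : G) : G :=
  (vadd (MfP P x.1) (if x.2 then dP P else v0), x.2).

Section MA.
Variable F : G -> G.
Hypothesis HF : maut F.

Lemma F_mul x y : F (gmul x y) = gmul (F x) (F y). Proof. by case: HF => H _; apply: H. Qed.
Lemma F_inj x y : F x = F y -> x = y. Proof. by case: HF => _ [H _]; apply: H. Qed.
Lemma F_surj y : exists x, F x = y. Proof. by case: HF => _ [_ H]; apply: H. Qed.

Lemma F_e : F ge = ge.
Proof. by apply: idem_e; rewrite -F_mul ge_mul. Qed.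

Lemma F_sq h : F (sq h) = sq (F h). Proof. exact: F_mul. Qed.

Lemma F_snd x : (F x).2 = x.2.
Proof.
case Ex: x.2.
- case E2: (F x).2 => //; exfalso.
  have : x.2 = false; last by rewrite Ex.
  apply/trans_char => h; apply: F_inj; rewrite !F_mul.
  exact: (proj1 (trans_char (F x)) E2 (F h)).
- apply/trans_char => h; case: (F_surj h) => h' <-.
  rewrite -F_sq -!F_mul; congr F; move: h'; exact/trans_char.
Qed.

Definition Mf z := (F (z, false)).1.
Definition dd := (F (v0, true)).1.

Lemma F_trans z : F (z, false) = (Mf z, false).
Proof. by rewrite /Mf; case E: (F (z,false)) => [w c]; have := F_snd (z,false); rewrite E /= => ->. Qed.

Lemma F_A : F (v0, true) = (dd, true).
Proof. by rewrite /dd; case E: (F (v0,true)) => [w c]; have := F_snd (v0,true); rewrite E /= => ->. Qed.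

Lemma F_gen z b : F (z, b) = (vadd (Mf z) (if b then dd else v0), b).
Proof.
have -> : ((z, b) : G) = gmul (z, false) (v0, b).
  rewrite /gmul /=; congr pair; apply: V_eq => /=; ring.
rewrite F_mul F_trans; case: b; first by rewrite F_A.
by rewrite -/ge F_e.
Qed.

Lemma Mf_add z z' : Mf (vadd z z') = vadd (Mf z) (Mf z').
Proof.
have := F_mul (z, false) (z', false); rewrite !F_trans /gmul /= => [[]] //.
Qed.


Lemma Mf_scale k z : Mf (vscale k z) = vscale k (Mf z).
Proof.
have := @additive_int (fun k => Mf (vscale k z)).
have -> : vscale 1 z = z by apply: V_eq => /=; ring.
apply=> a b; rewrite -Mf_add; congr Mf; apply: V_eq => /=; ring.
Qed.

Lemma Mf_lin z : Mf z = vadd (vscale (vp z) (Mf (mkV 1 0 0)))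
   (vadd (vscale (vq z) (Mf (mkV 0 1 0))) (vscale (vr z) (Mf (mkV 0 0 1)))).
Proof.
rewrite -!Mf_scale -!Mf_add; congr Mf; apply: V_eq => /=; ring.
Qed.

Lemma dd_sq : vp dd + vq dd = 0.
Proof.
have := F_sq (v0, true); rewrite /sq /gmul /= -/ge F_e F_A /= => -[] *; lia.
Qed.

Lemma comm_A z : vadd dd (vA (Mf z)) = vadd (Mf (vA z)) dd.
Proof.
have E : gmul (v0, true) (z, false) = gmul (vA z, false) (v0, true).
  rewrite /gmul /=; congr pair; apply: V_eq => /=; ring.
have := f_equal F E; rewrite !F_mul F_A !F_trans /gmul /= => -[] *.
apply: V_eq => /=; lia.
Qed.

Definition Fparams : params :=
  Params (vp (Mf (mkV 1 0 0))) (vp (Mf (mkV 1 0 0)) + vq (Mf (mkV 1 0 0)))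
         (vr (Mf (mkV 1 0 0))) (vp (Mf (mkV 0 0 1))) (vr (Mf (mkV 0 0 1)))
         (vp dd) (vr dd).

Lemma F_params x : F x = PhiP Fparams x.
Proof.
case: x => z b; rewrite F_gen /PhiP /Fparams /dP /=; congr pair.
have C1 := comm_A (mkV 1 0 0).
have C3 := comm_A (mkV 0 0 1).
have E3 : vA (mkV 0 0 1) = vscale (-1) (mkV 0 0 1) by apply: V_eq => /=; ring.
rewrite E3 Mf_scale in C3.
have E1 : vA (mkV 1 0 0) = mkV 0 1 0 by apply: V_eq.
rewrite E1 in C1.
have D := dd_sq.
rewrite [Mf z]Mf_lin.
move: C1 C3 D.
case: (Mf (mkV 1 0 0)) => a1 b1 c1; case: (Mf (mkV 0 1 0)) => a2 b2 c2;
case: (Mf (mkV 0 0 1)) => a3 b3 c3; case: dd => d1 d2 d3 /=.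
rewrite /vadd /vA /= => -[] E1' E2 E3' -[] E4 E5 E6 D.
have -> : a2 = b1 by lia. have -> : b2 = a1 by lia. have -> : c2 = - c1 by lia.
have -> : b3 = - a3 by lia. have -> : d2 = - d1 by lia.
case: b => /=; apply: V_eq => /=; ring.
Qed.

End MA.

Lemma int_unit (a b : int) : a * b = 1 -> a = 1 \/ a = -1.
Proof.
move=> H.
have : a \is a intUnitRing.unitz by apply: (@intUnitRing.unitzPl a b); rewrite mulrC.
lia.
Qed.

Definition detN (P : params) := (2 * pa P - peps P) * pe P - 2 * pg P * pdl P.

Lemma structure F : maut F -> exists P : params,
  (forall x, F x = PhiP P x) /\ (peps P = 1 \/ peps P = -1) /\ (detN P = 1 \/ detN P = -1).
Proof.
move=> HF; have := F_params HF; move: (Fparams F) => P FP; exists P.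
have Hpre : forall y, exists z, PhiP P (z, false) = (y, false).
  move=> y; case: (F_surj HF (y, false)) => [[z b]] E.
  have Eb := F_snd HF (z, b); rewrite E /= in Eb; rewrite -Eb in E.
  by exists z; rewrite -FP.
have Heps : peps P = 1 \/ peps P = -1.
  case: (Hpre (mkV 1 0 0)) => [[p q r]]; rewrite /PhiP /= => -[] E1 E2 E3.
  apply: (@int_unit _ (p + q)); lia.
split => //; split => //.
case: (Hpre (mkV 1 (-1) 0)) => [[x1 q1 y1]]; rewrite /PhiP /= => -[] E1 E2 E3.
case: (Hpre (mkV 0 0 1)) => [[x2 q2 y2]]; rewrite /PhiP /= => -[] E4 E5 E6.
have Q1 : q1 = - x1.
  have : peps P * (x1 + q1) = 0 by lia.
  by case: Heps => ->; lia.
have Q2 : q2 = - x2.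
  have : peps P * (x2 + q2) = 0 by lia.
  by case: Heps => ->; lia.
subst q1 q2.
apply: (@int_unit _ (x1 * y2 - x2 * y1)).
rewrite /detN.
move: E1 E2 E3 E4 E5 E6; move: (pa P) (peps P) (pg P) (pdl P) (pe P) => a e g dl et E1 E2 E3 E4 E5 E6.
have K1 : (2 * a - e) * x1 + dl * y1 = 1 by lia.
have K2 : 2 * g * x1 + et * y1 = 0 by lia.
have K3 : (2 * a - e) * x2 + dl * y2 = 0 by lia.
have K4 : 2 * g * x2 + et * y2 = 1 by lia.
have -> : ((2 * a - e) * et - 2 * g * dl) * (x1 * y2 - x2 * y1) =
  ((2 * a - e) * x1 + dl * y1) * (2 * g * x2 + et * y2) -
  ((2 * a - e) * x2 + dl * y2) * (2 * g * x1 + et * y1) by ring.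
by rewrite K1 K2 K3 K4; ring.
Qed.

Section Orb.
Variable T : finType.
Variable f : T -> T.
Hypothesis finv : involutive f.

Lemma pairset_eq a b : ([set a; f a] == [set b; f b]) = (a == b) || (a == f b).
Proof.
apply/eqP/orP.
- move=> E; have : a \in [set b; f b] by rewrite -E !inE eqxx.
  by rewrite !inE => /orP.
- case=> /eqP ->; first by [].
  by rewrite finv setUC.
Qed.

Let rk (x : T) := (enum_rank x : nat).
Let Alow := [set x | (rk x <= rk (f x))%nat].
Let Bhi := [set x | (rk (f x) <= rk x)%nat].

Lemma orbit_card : (#|[set [set x; f x] | x : T]| * 2 = #|T| + #|[set x | f x == x]|)%nat.
Proof.
have finj : injective f := inv_inj finv.
have HB : #|Bhi| = #|Alow|.
  suff -> : Bhi = f @: Alow by rewrite card_imset.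
  apply/setP => y; apply/idP/imsetP.
  - rewrite inE => H; exists (f y); last by rewrite finv.
    by rewrite inE finv.
  - by case=> x; rewrite !inE => H ->; rewrite finv.
have HU : #|[predU Alow & Bhi]| = #|T|.
  apply: eq_card => x; rewrite !inE /=; apply: leq_total.
have HI : #|[predI Alow & Bhi]| = #|[set x | f x == x]|.
  apply: eq_card => x; rewrite !inE /=; apply/andP/eqP.
  - move=> [H1 H2]; have E : rk x = rk (f x) by apply/eqP; rewrite eqn_leq H1 H2.
    by move/val_inj/enum_rank_inj: E.
  - by move=> ->; rewrite leqnn.
have HO : #|[set [set x; f x] | x : T]| = #|Alow|.
  rewrite -(card_in_imset (f := fun x => [set x; f x])).
  - apply: eq_card => S; apply/imsetP/imsetP.
    + case=> x _ ->; case: (leqP (rk x) (rk (f x))) => H.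
      * by exists x; rewrite // inE.
      * exists (f x); first by rewrite inE finv ltnW.
        by rewrite finv setUC.
    + by case=> x _ ->; exists x.
  - move=> x y; rewrite !inE => Hx Hy /eqP; rewrite pairset_eq => /orP [/eqP //|/eqP E].
    subst x; rewrite finv in Hx; apply: (enum_rank_inj).
    by apply: val_inj; apply/eqP; rewrite eqn_leq Hx Hy.
have := cardUI Alow Bhi; rewrite HU HI HB HO => ->.
by rewrite muln2 addnn.
Qed.

End Orb.

Record M2 := mkM2 { k11 : int; k12 : int; k21 : int; k22 : int }.
Definition inK (K : M2) (v : int * int) :=
  exists k c : int, v.1 = k11 K * k + k12 K * c /\ v.2 = k21 K * k + k22 K * c.
Definition detK K := k11 K * k22 K - k12 K * k21 K.

Lemma inK_opp K (v : int * int) : inK K v -> inK K (- v.1, - v.2).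
Proof. by case=> k [c [H1 H2]]; exists (- k), (- c); rewrite /= H1 H2; split; ring. Qed.

Lemma inK_add K (v w : int * int) : inK K v -> inK K w -> inK K (v.1 + w.1, v.2 + w.2).
Proof.
case=> k [c [H1 H2]] [k' [c' [H1' H2']]]; exists (k + k'), (c + c').
by rewrite /= H1 H2 H1' H2'; split; ring.
Qed.

Lemma inK_ext K (v w : int * int) : v.1 = w.1 -> v.2 = w.2 -> inK K v -> inK K w.
Proof. by case: v; case: w => ? ? ? ? /= <- <-. Qed.

Definition b2 (b : bool) : int := (nat_of_bool b)%:Z.

Lemma b2_mod (m : int) : 0 <= m < 2 -> b2 (m == 1) = m.
Proof. by move=> H; case: (m =P 1) => [->|/eqP Hm] //; rewrite /b2 /=; lia. Qed.

Lemma b2_inj2 a b (t : int) : b2 a - b2 b = 2 * t -> a = b.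
Proof. by case: a; case: b; rewrite /b2 /= => H //; lia. Qed.

Section Lat.
Variable K : M2.

Definition hg := gcdz (k11 K) (k12 K).
Definition hu := projT1 (Bezoutz (k11 K) (k12 K)).
Definition hv := proj1_sig (projT2 (Bezoutz (k11 K) (k12 K))).
Definition ha1 := divz (k11 K) hg.
Definition ha2 := divz (k12 K) hg.
Definition hD := ha1 * k22 K - ha2 * k21 K.
Definition hh := `|hD|.
Definition hy := hu * k21 K + hv * k22 K.

Lemma huv : hu * k11 K + hv * k12 K = hg.
Proof. by rewrite /hu /hv; case: (Bezoutz _ _) => u [v H]. Qed.

Lemma ha1E : k11 K = ha1 * hg.
Proof. by rewrite /ha1 divzK // dvdz_gcdl. Qed.
Lemma ha2E : k12 K = ha2 * hg.
Proof. by rewrite /ha2 divzK // dvdz_gcdr. Qed.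

Hypothesis HK : detK K != 0.

Lemma hg_neq0 : hg != 0.
Proof.
rewrite /hg gcdz_eq0; apply/negP => /andP [/eqP E1 /eqP E2].
by move: HK; rewrite /detK E1 E2 !mul0r subr0 eqxx.
Qed.

Lemma hg_gt0 : 0 < hg.
Proof. by rewrite lt_def hg_neq0 /hg /gcdz. Qed.

Lemma hab : hu * ha1 + hv * ha2 = 1.
Proof.
apply: (mulIf hg_neq0); rewrite mul1r -{2}huv ha1E ha2E; ring.
Qed.

Lemma detE : detK K = hg * hD.
Proof. by rewrite /detK /hD ha1E ha2E; ring. Qed.

Lemma hh_gt0 : 0 < hh.
Proof.
rewrite /hh normr_gt0; apply/negP => /eqP E.
by move: HK; rewrite detE E mulr0 eqxx.
Qed.

Lemma inK_H (w : int * int) : inK K w <-> exists t s : int, w.1 = hg * t /\ w.2 = hy * t + hh * s.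
Proof.
split.
- case=> k [c [H1 H2]].
  have E2 : k21 K * k + k22 K * c = hy * (ha1 * k + ha2 * c) + hD * (hu * c - hv * k).
    have -> : hy * (ha1 * k + ha2 * c) + hD * (hu * c - hv * k) =
       (k21 K * k + k22 K * c) * (hu * ha1 + hv * ha2) by rewrite /hy /hD; ring.
    by rewrite hab mulr1.
  exists (ha1 * k + ha2 * c).
  case: (lerP 0 hD) => Hs.
  + exists (hu * c - hv * k); split; first by rewrite H1 ha1E ha2E; ring.
    by rewrite H2 E2 /hh ger0_norm.
  + exists (- (hu * c - hv * k)); split; first by rewrite H1 ha1E ha2E; ring.
    by rewrite H2 E2 /hh ltr0_norm //; ring.
- case=> t [s [H1 H2]].
  have [s0 Hs0] : exists s0, hh * s = hD * s0.
    case: (lerP 0 hD) => Hs.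
    + by exists s; rewrite /hh ger0_norm.
    + by exists (- s); rewrite /hh ltr0_norm //; ring.
  exists (hu * t - ha2 * s0), (hv * t + ha1 * s0); split.
  + rewrite H1 ha1E ha2E.
    have -> : hg * t = hg * t * (hu * ha1 + hv * ha2) by rewrite hab mulr1.
    ring.
  + by rewrite H2 Hs0 /hy /hD; ring.
Qed.

Definition ct (w : int * int) := divz w.1 hg.
Definition cr1 (w : int * int) := modz w.1 hg.
Definition cr2 (w : int * int) := modz (w.2 - hy * ct w) hh.

Lemma cr_bounds (w : int * int) : 0 <= cr1 w < hg /\ 0 <= cr2 w < hh.
Proof.
have Hg := hg_gt0; have Hh := hh_gt0.
rewrite /cr1 /cr2 !modz_ge0 ?hg_neq0 ?(lt0r_neq0 Hh) //=; split.
- by have := ltz_mod w.1 (hg_neq0); rewrite gtr0_norm.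
- by have := ltz_mod (w.2 - hy * ct w) (lt0r_neq0 Hh); rewrite gtr0_norm.
Qed.

Lemma can_eq (w w' : int * int) :
  inK K (w.1 - w'.1, w.2 - w'.2) <-> (cr1 w = cr1 w' /\ cr2 w = cr2 w').
Proof.
rewrite inK_H; split.
- case=> t [s [/= H1 H2]].
  have Ew1 : w.1 = t * hg + w'.1 by lia.
  have Ect : ct w = t + ct w' by rewrite /ct Ew1 divzMDl // hg_neq0.
  split; first by rewrite /cr1 Ew1 modzMDl.
  rewrite /cr2 Ect.
  have -> : w.2 - hy * (t + ct w') = s * hh + (w'.2 - hy * ct w') by lia.
  by rewrite modzMDl.
- rewrite /cr1 /cr2 => -[E1 E2].
  have D1 := divz_eq w.1 hg; have D1' := divz_eq w'.1 hg.
  have D2 := divz_eq (w.2 - hy * ct w) hh; have D2' := divz_eq (w'.2 - hy * ct w') hh.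
  exists (ct w - ct w'), (divz (w.2 - hy * ct w) hh - divz (w'.2 - hy * ct w') hh).
  rewrite /ct /= in D1 D1' D2 D2' *; split.
  + by rewrite {1}D1 {1}D1' E1; ring.
  + have F2 : w.2 = (w.2 - hy * divz w.1 hg) + hy * divz w.1 hg by ring.
    have F2' : w'.2 = (w'.2 - hy * divz w'.1 hg) + hy * divz w'.1 hg by ring.
    rewrite {1}F2 {1}F2' {1}D2 {1}D2' E2; ring.
Qed.

Definition Q := ('I_(absz hg) * 'I_(absz hh))%type.

Lemma cr1_lt (w : int * int) : (absz (cr1 w) < absz hg)%nat.
Proof. have [/andP [B1 B2] _] := cr_bounds w; lia. Qed.
Lemma cr2_lt (w : int * int) : (absz (cr2 w) < absz hh)%nat.
Proof. have [_ /andP [B1 B2]] := cr_bounds w; lia. Qed.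

Definition canQ (w : int * int) : Q := (Ordinal (cr1_lt w), Ordinal (cr2_lt w)).
Definition repQ (q : Q) : int * int := ((q.1 : nat)%:Z, (q.2 : nat)%:Z).

Lemma canQ_eq (w w' : int * int) : canQ w = canQ w' <-> inK K (w.1 - w'.1, w.2 - w'.2).
Proof.
rewrite can_eq; have [/andP [A1 A2] /andP [A3 A4]] := cr_bounds w.
have [/andP [A5 A6] /andP [A7 A8]] := cr_bounds w'.
split.
- move=> [E1 E2]; split; lia.
- by move=> [E1 E2]; congr pair; apply: val_inj; rewrite /= ?E1 ?E2.
Qed.

Lemma canQ_rep q : canQ (repQ q) = q.
Proof.
case: q => [[i Hi] [j Hj]]; rewrite /canQ /repQ /=.
have Hg := hg_gt0; have Hh := hh_gt0.
have E1 : cr1 (i%:Z, j%:Z) = i%:Z by rewrite /cr1 modz_small //=; lia.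
have Ect : ct (i%:Z, j%:Z) = 0 by rewrite /ct divz_small //=; lia.
have E2 : cr2 (i%:Z, j%:Z) = j%:Z by rewrite /cr2 Ect mulr0 subr0 modz_small //=; lia.
by congr pair; apply: val_inj; rewrite /= ?E1 ?E2.
Qed.

Lemma rep_can (w : int * int) : inK K ((repQ (canQ w)).1 - w.1, (repQ (canQ w)).2 - w.2).
Proof. by apply/canQ_eq; rewrite canQ_rep. Qed.

Lemma card_Q : #|{: Q}| = absz (detK K).
Proof. rewrite card_prod !card_ord detE abszM /hh; congr (_ * _)%nat; lia. Qed.

Lemma canQ_surj q : exists w, canQ w = q.
Proof. by exists (repQ q); apply: canQ_rep. Qed.

Section Iota.
Variable c : int * int.
Definition iotaQ (q : Q) : Q := canQ (c.1 - (repQ q).1, c.2 - (repQ q).2).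

Lemma iotaQ_can (w : int * int) : iotaQ (canQ w) = canQ (c.1 - w.1, c.2 - w.2).
Proof.
apply/canQ_eq; have := inK_opp (rep_can w).
by apply: inK_ext => /=; ring.
Qed.

Lemma iotaQ_inv : involutive iotaQ.
Proof.
move=> q; case: (canQ_surj q) => w <-; rewrite !iotaQ_can.
by congr canQ; case: w => /= ? ?; congr pair; ring.
Qed.

Definition par1 (w : bool * bool) := c.1 + k11 K * b2 w.1 + k12 K * b2 w.2.
Definition par2 (w : bool * bool) := c.2 + k21 K * b2 w.1 + k22 K * b2 w.2.
Definition parcond (w : bool * bool) := (modz (par1 w) 2 == 0) && (modz (par2 w) 2 == 0).
Definition fmap (w : bool * bool) : Q := canQ (divz (par1 w) 2, divz (par2 w) 2).

Lemma K_inj (v1 v2 : int) : k11 K * v1 + k12 K * v2 = 0 -> k21 K * v1 + k22 K * v2 = 0 ->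
  v1 = 0 /\ v2 = 0.
Proof.
move=> H1 H2.
have E1 : detK K * v1 = k22 K * (k11 K * v1 + k12 K * v2) - k12 K * (k21 K * v1 + k22 K * v2).
  by rewrite /detK; ring.
have E2 : detK K * v2 = k11 K * (k21 K * v1 + k22 K * v2) - k21 K * (k11 K * v1 + k12 K * v2).
  by rewrite /detK; ring.
rewrite H1 H2 !mulr0 subr0 in E1 E2.
by move/eqP: E1; move/eqP: E2; rewrite !mulf_eq0 (negbTE HK) /= => /eqP -> /eqP ->.
Qed.

Lemma half_ok (x : int) : modz x 2 = 0 -> x = 2 * divz x 2.
Proof. by move=> H; rewrite {1}(divz_eq x 2) H addr0 mulrC. Qed.



Lemma fmap_fix w : parcond w -> iotaQ (fmap w) = fmap w.
Proof.
rewrite /parcond => /andP [/eqP H1 /eqP H2].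
have E1 := half_ok H1; have E2 := half_ok H2.
rewrite /fmap iotaQ_can; apply/canQ_eq.
exists (- b2 w.1), (- b2 w.2); rewrite /=; move: E1 E2; rewrite /par1 /par2.
move: (divz _ 2) (divz _ 2) => x1 x2 E1 E2; split; lia.
Qed.

Lemma fix_fmap q : iotaQ q = q -> exists w, parcond w /\ fmap w = q.
Proof.
move=> Hq; set x := repQ q.
have Hx : canQ x = q by apply: canQ_rep.
have : canQ (c.1 - x.1, c.2 - x.2) = canQ x by rewrite -iotaQ_can Hx.
case/canQ_eq => k [l [/= H1 H2]].
have D1 := divz_eq (- k) 2; have D2 := divz_eq (- l) 2.
have B1 : 0 <= modz (- k) 2 < 2 by rewrite modz_ge0 // ltz_pmod.
have B2 : 0 <= modz (- l) 2 < 2 by rewrite modz_ge0 // ltz_pmod.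
exists (modz (- k) 2 == 1, modz (- l) 2 == 1).
have P1 : par1 (modz (- k) 2 == 1, modz (- l) 2 == 1) =
   (x.1 - k11 K * divz (- k) 2 - k12 K * divz (- l) 2) * 2.
  rewrite /par1 /= !b2_mod //.
  move: D1 D2 H1; move: (modz (-k) 2) (modz (-l) 2) (divz (-k) 2) (divz (-l) 2) => a b da db.
  move=> D1 D2 H1; lia.
have P2 : par2 (modz (- k) 2 == 1, modz (- l) 2 == 1) =
   (x.2 - k21 K * divz (- k) 2 - k22 K * divz (- l) 2) * 2.
  rewrite /par2 /= !b2_mod //.
  move: D1 D2 H2; move: (modz (-k) 2) (modz (-l) 2) (divz (-k) 2) (divz (-l) 2) => a b da db.
  move=> D1 D2 H2; lia.
split; first by rewrite /parcond P1 P2 !modzMl !eqxx.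
rewrite /fmap P1 P2 !mulzK // -Hx; apply/canQ_eq.
by exists (- divz (- k) 2), (- divz (- l) 2); split => /=; ring.
Qed.

Lemma fmap_inj w w' : parcond w -> parcond w' -> fmap w = fmap w' -> w = w'.
Proof.
rewrite /parcond => /andP [/eqP H1 /eqP H2] /andP [/eqP H1' /eqP H2'].
have E1 := half_ok H1; have E2 := half_ok H2.
have E1' := half_ok H1'; have E2' := half_ok H2'.
rewrite /fmap => /canQ_eq [t [u [/= T1 T2]]].
move: E1 E2 E1' E2' T1 T2; rewrite /par1 /par2.
move: (divz (c.1 + _ + _) 2) (divz (c.2 + _ + _) 2) => x1 x2.
move: (divz (c.1 + _ + _) 2) (divz (c.2 + _ + _) 2) => x1' x2'.
move=> E1 E2 E1' E2' T1 T2.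
have [Z1 Z2] : (b2 w.1 - b2 w'.1 - 2 * t = 0) /\ (b2 w.2 - b2 w'.2 - 2 * u = 0).
  apply: K_inj.
  - have -> : k11 K * (b2 w.1 - b2 w'.1 - 2 * t) + k12 K * (b2 w.2 - b2 w'.2 - 2 * u)
       = (c.1 + k11 K * b2 w.1 + k12 K * b2 w.2) - (c.1 + k11 K * b2 w'.1 + k12 K * b2 w'.2)
         - 2 * (k11 K * t + k12 K * u) by ring.
    by rewrite E1 E1' -T1; ring.
  - have -> : k21 K * (b2 w.1 - b2 w'.1 - 2 * t) + k22 K * (b2 w.2 - b2 w'.2 - 2 * u)
       = (c.2 + k21 K * b2 w.1 + k22 K * b2 w.2) - (c.2 + k21 K * b2 w'.1 + k22 K * b2 w'.2)
         - 2 * (k21 K * t + k22 K * u) by ring.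
    by rewrite E2 E2' -T2; ring.
case: w w' Z1 Z2 {E1 E2 E1' E2' T1 T2 H1 H2 H1' H2'} => a b [a' b'] /= Z1 Z2.
have Ea : a = a' by apply: (@b2_inj2 a a' t); lia.
have Eb : b = b' by apply: (@b2_inj2 b b' u); lia.
by rewrite Ea Eb.
Qed.

Lemma fix_card : #|[set q | iotaQ q == q]| = #|[set w | parcond w]|.
Proof.
suff -> : [set q | iotaQ q == q] = fmap @: [set w | parcond w].
  by rewrite card_in_imset // => w w'; rewrite !inE; apply: fmap_inj.
apply/setP => q; rewrite inE; apply/eqP/imsetP.
- by move/fix_fmap => [w [Hw <-]]; exists w; rewrite ?inE.
- by case=> w; rewrite inE => Hw ->; apply: fmap_fix.
Qed.
End Iota.
End Lat.

Definition TW P (x y : G) := exists h, x = gmul (gmul h y) (ginv (PhiP P h)).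

Definition vsub x y := vadd x (vopp y).

Definition RelB P (b : bool) z z' := exists w (hb : bool),
  z = vadd (vsub w (vAb b (MfP P w))) (if hb then vsub (vA z') (vAb b (dP P)) else z').

Lemma TW_E P z b z' b' : TW P (z, b) (z', b') <-> b = b' /\ RelB P b z z'.
Proof.
split.
- case=> [[w hb]]; rewrite /gmul /ginv /PhiP /= => -[-> ->].
  split; first by case: hb; case: b'.
  exists w, hb; case: hb; case: b' => /=; apply: V_eq => /=; ring.
- case=> <- [w [hb ->]]; exists (w, hb); rewrite /gmul /ginv /PhiP /=.
  congr pair; last by case: hb; case: b.
  case: hb; case: b => /=; apply: V_eq => /=; ring.
Qed.


Definition KB P (b : bool) :=
  if b then mkM2 (2 + 2 * pa P) (pdl P) (2 * pg P) (1 + pe P)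
  else mkM2 (- (2 * pa P)) (- pdl P) (- (2 * pg P)) (1 - pe P).
Definition cB P (b : bool) (s : int) : int * int :=
  if b then (s + pmu P, pnu P) else (s - pmu P, - pnu P).
Definition m0 z := divz (vp z + vq z) 2.
Definition s0 z := modz (vp z + vq z) 2.
Definition XB P (b : bool) z : int * int :=
  if b then (vp z - (2 + pa P) * m0 z, vr z - pg P * m0 z)
  else (vp z - (1 - pa P) * m0 z, vr z + pg P * m0 z).

Lemma ms z : vp z + vq z = 2 * m0 z + s0 z /\ 0 <= s0 z < 2.
Proof.
rewrite /m0 /s0; split; first by rewrite mulrC -divz_eq.
by rewrite modz_ge0 // ltz_pmod.
Qed.

Lemma red P b z z' : peps P = -1 ->
  RelB P b z z' <-> s0 z = s0 z' /\
   (inK (KB P b) ((XB P b z).1 - (XB P b z').1, (XB P b z).2 - (XB P b z').2) \/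
    inK (KB P b) ((XB P b z).1 + (XB P b z').1 - (cB P b (s0 z)).1,
                  (XB P b z).2 + (XB P b z').2 - (cB P b (s0 z)).2)).
Proof.
move=> He.
have [E1 B1] := ms z; have [E2 B2] := ms z'.
rewrite /RelB /inK /KB /cB /XB /MfP /dP He.
move: E1 B1 E2 B2; move: (m0 z) (s0 z) (m0 z') (s0 z') => m s m' s'.
case: z => p q r; case: z' => p' q' r' /=.
move: (pa P) (pg P) (pdl P) (pe P) (pmu P) (pnu P) => a g dl e mu nu E1 B1 E2 B2.
split.
- case=> [[x y c]] [hb]; case: hb; case: b => /= -[Hp Hq Hr]; subst p q r.
  + have Em : m = m' + x + y by lia.
    have Es : s = s' by lia.
    subst m s; split => //; right; exists (- y - m'), c; split; lia.
  + have Em : m = m' + x + y by lia.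
    have Es : s = s' by lia.
    subst m s; split => //; right; exists (- y - m'), c; split; lia.
  + have Em : m = m' + x + y by lia.
    have Es : s = s' by lia.
    subst m s; split => //; left; exists (- y), c; split; lia.
  + have Em : m = m' + x + y by lia.
    have Es : s = s' by lia.
    subst m s; split => //; left; exists (- y), c; split; lia.
- case=> Es [[k [c [H1 H2]]]|[k [c [H1 H2]]]]; subst s'.
  + exists (mkV (m - m' + k) (- k) c), false; case: b H1 H2 => /= H1 H2;
    apply: V_eq => /=; lia.
  + exists (mkV (m + k) (- k - m') c), true; case: b H1 H2 => /= H1 H2;
    apply: V_eq => /=; lia.
Qed.

Section Reid.
Variable phi : aff -> aff.
Hypothesis H : is_aut phi.
Variable P : params.
Hypothesis HP : forall x, PhiOf H x = PhiP P x.

Lemma twE x y : twisted phi (emb x) (emb y) <-> TW P x y.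
Proof.
rewrite (twistedE H); split; case=> h E; exists h; by rewrite E HP.
Qed.

Lemma reps_emb (n : nat) (s : seq aff) : (forall i : nat, (i < n)%nat -> Gamma (nth aff_one s i)) ->
  exists xi : 'I_n -> G, forall i : 'I_n, nth aff_one s i = emb (xi i).
Proof.
move=> HG.
have Hx : forall i : 'I_n, exists x, nth aff_one s i = emb x.
  by move=> i; apply: Gamma_embP; apply: HG.
exists (fun i => proj1_sig (constructive_indefinite_description _ (Hx i))).
by move=> i; case: constructive_indefinite_description.
Qed.

Lemma reid_inf (kap : G -> nat) :
  (forall x y, TW P x y -> kap x = kap y) -> (forall B, exists x, (B < kap x)%nat) ->
  forall n, ~ reid_classes phi n.
Proof.
move=> Hinv Hunb n [s [Hs [HG [Hd Hc]]]].
case: (reps_emb HG) => xi Exi.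
case: (Hunb (\max_(i < n) kap (xi i))) => x Hx.
case: (Hc _ (Gamma_emb x)) => i [Hi Htw].
have := Exi (Ordinal Hi); rewrite /= => E; rewrite E in Htw.
move/twE/Hinv: Htw => Ek.
have := @leq_bigmax _ (fun i => kap (xi i)) (Ordinal Hi); rewrite /= -Ek.
by rewrite leqNgt Hx.
Qed.

Lemma reid_fin (Y : finType) (kap : G -> Y) (S : {set Y}) :
  (forall x y, TW P x y <-> kap x = kap y) -> (forall x, kap x \in S) ->
  (forall y, y \in S -> exists x, kap x = y) ->
  reid_classes phi #|S| /\ (forall n, reid_classes phi n -> n = #|S|).
Proof.
move=> Hk HS HS'; split.
- pose pk (y : Y) : G :=
    match excluded_middle_informative (exists x, kap x = y) with
    | left e => proj1_sig (constructive_indefinite_description _ e)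
    | right _ => (v0, false) end.
  have Hpk : forall y, y \in S -> kap (pk y) = y.
    move=> y Hy; rewrite /pk; case: excluded_middle_informative => [e|ne].
    + by case: constructive_indefinite_description.
    + by exfalso; apply: ne; apply: HS'.
  pose y0 := kap (v0, false).
  exists [seq emb (pk y) | y <- enum S].
  have Hsz : size [seq emb (pk y) | y <- enum S] = #|S| by rewrite size_map -cardE.
  have Hnth : forall i, (i < #|S|)%nat -> nth aff_one [seq emb (pk y) | y <- enum S] i = emb (pk (nth y0 (enum S) i)).
    by move=> i Hi; rewrite (nth_map y0) // -cardE.
  have Hin : forall i, (i < #|S|)%nat -> nth y0 (enum S) i \in S.
    by move=> i Hi; rewrite -mem_enum mem_nth // -cardE.
  split => //; split; last split.
  + by move=> i Hi; rewrite Hnth //; apply: Gamma_emb.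
  + move=> i j Hi Hj Hij; rewrite !Hnth // => /twE /Hk.
    rewrite !Hpk ?Hin // => E; apply: Hij.
    by move/eqP: E; rewrite nth_uniq ?enum_uniq -?cardE // => /eqP.
  + move=> g /Gamma_embP [x ->].
    have Hx : kap x \in enum S by rewrite mem_enum.
    exists (index (kap x) (enum S)); split; first by rewrite cardE index_mem.
    rewrite Hnth; last by rewrite cardE index_mem.
    by apply/twE/Hk; rewrite nth_index // Hpk // -mem_enum.
- move=> n [s [Hs [HG [Hd Hc]]]].
  case: (reps_emb HG) => xi Exi.
  have Hinj : injective (fun i => kap (xi i)).
    move=> i j /Hk /twE; rewrite -!Exi => Htw.
    apply: val_inj; case: (eqVneq (val i) (val j)) => // /eqP Hij.
    by exfalso; apply: (Hd i j (ltn_ord i) (ltn_ord j) Hij).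
  have -> : S = [set kap (xi i) | i : 'I_n].
    apply/setP => y; apply/idP/imsetP.
    + move=> /HS' [x <-].
      case: (Hc _ (Gamma_emb x)) => i [Hi Htw].
      exists (Ordinal Hi) => //; apply/Hk/twE; by rewrite -Exi.
    + by case=> i _ ->.
  by rewrite card_imset // card_ord.
Qed.

End Reid.

Definition iabs (x : int) : nat := absz x.

Lemma TW_lam P x y : peps P = 1 -> TW P x y -> vp x.1 + vq x.1 = vp y.1 + vq y.1.
Proof.
move=> He; case: x => z b; case: y => z' b' /TW_E [<- [w [hb ->]]].
rewrite /vsub /MfP /dP He; case: b; case: hb => /=; ring.
Qed.

Lemma annih K : detK K = 0 -> exists l1 l2 : int, ((l1 != 0) || (l2 != 0)) /\
  l1 * k11 K + l2 * k21 K = 0 /\ l1 * k12 K + l2 * k22 K = 0.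
Proof.
rewrite /detK => HD.
have [H1|H1] := boolP ((k21 K != 0) || (k11 K != 0)).
- exists (k21 K), (- k11 K); rewrite oppr_eq0; split => //; split; first by ring.
  have -> : k21 K * k12 K + - k11 K * k22 K = - (k11 K * k22 K - k12 K * k21 K) by ring.
  by rewrite HD oppr0.
move: H1; rewrite negb_or !negbK => /andP [/eqP H21 /eqP H11].
have [H2|H2] := boolP ((k22 K != 0) || (k12 K != 0)).
- exists (k22 K), (- k12 K); rewrite oppr_eq0; split => //; rewrite H21 H11; split; ring.
move: H2; rewrite negb_or !negbK => /andP [/eqP H22 /eqP H12].
by exists 1, 0; rewrite H11 H21 H12 H22; split => //; split; ring.
Qed.

Lemma inK_annih K l1 l2 (v : int * int) : l1 * k11 K + l2 * k21 K = 0 ->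
  l1 * k12 K + l2 * k22 K = 0 -> inK K v -> l1 * v.1 + l2 * v.2 = 0.
Proof.
move=> L1 L2 [k [c [-> ->]]].
have -> : l1 * (k11 K * k + k12 K * c) + l2 * (k21 K * k + k22 K * c) =
  (l1 * k11 K + l2 * k21 K) * k + (l1 * k12 K + l2 * k22 K) * c by ring.
by rewrite L1 L2; ring.
Qed.

Lemma ms_small (x1 x2 : int) (sb : bool) :
  m0 (mkV x1 (b2 sb - x1) x2) = 0 /\ s0 (mkV x1 (b2 sb - x1) x2) = b2 sb.
Proof.
rewrite /m0 /s0 /= addrC subrK; case: sb; rewrite /b2 /=.
- by rewrite divz_small ?modz_small.
- by rewrite divz_small ?modz_small.
Qed.

Section Cases.
Variable phi : aff -> aff.
Hypothesis H : is_aut phi.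
Variable P : params.
Hypothesis HP : forall x, PhiOf H x = PhiP P x.

Lemma inf_eps1 : peps P = 1 -> forall n, ~ reid_classes phi n.
Proof.
move=> He; apply: (reid_inf HP (kap := fun x => absz (vp x.1 + vq x.1))).
- by move=> x y /(TW_lam He) ->.
- by move=> B; exists (mkV (B.+1)%:Z 0 0, false) => /=; lia.
Qed.

Lemma inf_det b : peps P = -1 -> detK (KB P b) = 0 -> forall n, ~ reid_classes phi n.
Proof.
move=> He HD.
case: (annih HD) => l1 [l2 [Hl [L1 L2]]].
pose C := l1 * (cB P b 0).1 + l2 * (cB P b 0).2.
pose lx z := l1 * (XB P b z).1 + l2 * (XB P b z).2.
apply: (@reid_inf phi H P HP (fun x : G => if (x.2 == b) && (s0 x.1 == 0) then iabs (2 * lx x.1 - C) else 0%nat)).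
- case=> z bx [z' by'] /TW_E [<- HR] /=.
  case: (eqVneq bx b) => [Eb|Nb] //=.
  subst bx; move/(red _ _ _ He): HR => [Es Hor]; rewrite /= Es.
  case: (eqVneq (s0 z') 0) => E0 //=.
  rewrite Es E0 in Hor.
  rewrite /lx /C.
  case: Hor => /(inK_annih L1 L2) /=;
    move: (XB P b z) (XB P b z') (cB P b 0) => [X1 X2] [Y1 Y2] [C1 C2] /= E; rewrite /iabs; lia.
- move=> B.
  have HL : 1 <= l1 * l1 + l2 * l2 by nia.
  pose N : int := (B + absz C + 1)%:Z.
  have HN : N <= N * (l1 * l1 + l2 * l2) by nia.
  exists (mkV (N * l1) (b2 false - N * l1) (N * l2), b).
  have [Em Es] := ms_small (N * l1) (N * l2) false.
  rewrite /= eqxx Es /= /lx /iabs.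
  have -> : XB P b (mkV (N * l1) (b2 false - N * l1) (N * l2)) = (N * l1, N * l2).
    by rewrite /XB Em; case: (b) => /=; rewrite !mulr0 ?subr0 ?addr0.
  rewrite /=.
  have -> : l1 * (N * l1) + l2 * (N * l2) = N * (l1 * l1 + l2 * l2) by ring.
  move: HN; move: (N * (l1 * l1 + l2 * l2)) => M HN.
  rewrite /N in HN; lia.
Qed.

End Cases.

Lemma b2s0 z : b2 (s0 z == 1) = s0 z.
Proof. have [_ B] := ms z; exact: b2_mod. Qed.

Lemma orbit_iff K (HK : detK K != 0) c (X X' : int * int) :
  [set canQ HK X; iotaQ HK c (canQ HK X)] = [set canQ HK X'; iotaQ HK c (canQ HK X')] <->
  inK K (X.1 - X'.1, X.2 - X'.2) \/ inK K (X.1 + X'.1 - c.1, X.2 + X'.2 - c.2).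
Proof.
have inv := iotaQ_inv HK c.
rewrite (iotaQ_can HK) (iotaQ_can HK).
split.
- move/eqP; rewrite -(iotaQ_can HK) -(iotaQ_can HK) (pairset_eq inv) => /orP [/eqP E|/eqP E].
  + by left; apply/(canQ_eq HK).
  + right; move: E; rewrite (iotaQ_can HK) => /(canQ_eq HK).
    by apply: inK_ext => /=; ring.
- rewrite -(iotaQ_can HK) -(iotaQ_can HK) => Hor; apply/eqP; rewrite (pairset_eq inv); apply/orP.
  case: Hor => Hk.
  + by left; apply/eqP/(canQ_eq HK).
  + right; apply/eqP; rewrite (iotaQ_can HK); apply/(canQ_eq HK).
    by move: Hk; apply: inK_ext => /=; ring.
Qed.

Lemma par_sum (K : M2) (c1 c2 : int) : modz (k11 K) 2 = 0 -> modz (k21 K) 2 = 0 ->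
  modz (k22 K) 2 = 0 ->
  addn #|[set w | parcond K (c1, c2) w]| #|[set w | parcond K (c1 + 1, c2) w]| =
   if modz c2 2 == 0 then 4%nat else 0%nat.
Proof.
move=> E11 E21 E22.
set A := [set w | parcond K (c1, c2) w]; set B := [set w | parcond K (c1 + 1, c2) w].
have HU : A :|: B = if modz c2 2 == 0 then setT else set0.
  apply/setP => w; rewrite !inE /parcond /par1 /par2 /=.
  case: (modz c2 2 =P 0) => Hc; rewrite ?inE; move: (b2 w.1) (b2 w.2) => x y; lia.
have HI : A :&: B = set0.
  apply/setP => w; rewrite !inE /parcond /par1 /par2 /=.
  move: (b2 w.1) (b2 w.2) => x y; lia.
rewrite -cardsUI HU HI cards0 addn0.
by case: (modz c2 2 == 0); rewrite ?cardsT ?cards0 // card_prod card_bool.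
Qed.

Section Fin.
Variable phi : aff -> aff.
Hypothesis H : is_aut phi.
Variable P : params.
Hypothesis HP : forall x, PhiOf H x = PhiP P x.
Hypothesis He : peps P = -1.
Hypothesis HK0 : detK (KB P false) != 0.
Hypothesis HK1 : detK (KB P true) != 0.

Definition orbF sb : {set {set Q (KB P false)}} :=
  [set [set q; iotaQ HK0 (cB P false (b2 sb)) q] | q : Q (KB P false)].
Definition orbT sb : {set {set Q (KB P true)}} :=
  [set [set q; iotaQ HK1 (cB P true (b2 sb)) q] | q : Q (KB P true)].
Definition Yt := ((bool * {set Q (KB P false)}) + (bool * {set Q (KB P true)}))%type.
Definition kapF (x : G) : Yt :=
  if x.2 then
    inr ((s0 x.1 == 1), [set canQ HK1 (XB P true x.1);
        iotaQ HK1 (cB P true (b2 (s0 x.1 == 1))) (canQ HK1 (XB P true x.1))])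
  else
    inl ((s0 x.1 == 1), [set canQ HK0 (XB P false x.1);
        iotaQ HK0 (cB P false (b2 (s0 x.1 == 1))) (canQ HK0 (XB P false x.1))]).
Definition Sset : {set Yt} := [set y : Yt |
  match y with inl p => p.2 \in orbF p.1 | inr p => p.2 \in orbT p.1 end].

Lemma s0_eq z z' : ((s0 z == 1) = (s0 z' == 1)) <-> s0 z = s0 z'.
Proof.
split; last by move=> ->.
by move=> E; rewrite -b2s0 E b2s0.
Qed.

Lemma kap_complete x y : TW P x y <-> kapF x = kapF y.
Proof.
case: x => z b; case: y => z' b'; rewrite TW_E /kapF /=.
case: b; case: b' => /=; try by split; [case|].
- split.
  + case=> _ /(red _ _ _ He) [Es Hor].
    have Esb : (s0 z == 1) = (s0 z' == 1) by rewrite Es.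
    rewrite Esb; congr inr; congr pair; apply/(orbit_iff HK1).
    by rewrite b2s0 -Es.
  + case=> Esb Eo; split => //; apply/(red _ _ _ He).
    have Es : s0 z = s0 z' by apply/s0_eq.
    split => //; rewrite -Esb in Eo; move/(orbit_iff HK1): Eo.
    by rewrite b2s0.
- split.
  + case=> _ /(red _ _ _ He) [Es Hor].
    have Esb : (s0 z == 1) = (s0 z' == 1) by rewrite Es.
    rewrite Esb; congr inl; congr pair; apply/(orbit_iff HK0).
    by rewrite b2s0 -Es.
  + case=> Esb Eo; split => //; apply/(red _ _ _ He).
    have Es : s0 z = s0 z' by apply/s0_eq.
    split => //; rewrite -Esb in Eo; move/(orbit_iff HK0): Eo.
    by rewrite b2s0.
Qed.

Lemma kap_in x : kapF x \in Sset.
Proof.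
case: x => z []; rewrite inE /kapF /=; apply/imsetP.
- by exists (canQ HK1 (XB P true z)).
- by exists (canQ HK0 (XB P false z)).
Qed.

Lemma XB_small b (X : int * int) sb : XB P b (mkV X.1 (b2 sb - X.1) X.2) = X.
Proof.
have [Em _] := ms_small X.1 X.2 sb.
rewrite /XB Em; case: b; rewrite !mulr0 ?subr0 ?addr0 /=; by case: (X).
Qed.

Lemma sb_small (X : int * int) sb : (s0 (mkV X.1 (b2 sb - X.1) X.2) == 1) = sb.
Proof. by have [_ ->] := ms_small X.1 X.2 sb; case: sb. Qed.

Lemma kap_onto y : y \in Sset -> exists x, kapF x = y.
Proof.
case: y => [[sb o]|[sb o]]; rewrite inE /= => /imsetP [q _ ->].
- have HX := canQ_rep HK0 q; move: (repQ q) HX => X HX.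
  exists (mkV X.1 (b2 sb - X.1) X.2, false).
  by rewrite /kapF !XB_small !sb_small HX.
- have HX := canQ_rep HK1 q; move: (repQ q) HX => X HX.
  exists (mkV X.1 (b2 sb - X.1) X.2, true).
  by rewrite /kapF !XB_small !sb_small HX.
Qed.

Lemma card_S : #|Sset| = addn (addn #|orbF true| #|orbF false|) (addn #|orbT true| #|orbT false|).
Proof.
rewrite -sum1_card big_sumType.
congr addn.
- rewrite (eq_bigl (fun p => xpredT p.1 && (p.2 \in orbF p.1))); last first.
    by case=> sb o; rewrite inE.
  by rewrite -(pair_big_dep xpredT (fun sb o => o \in orbF sb) (fun _ _ => 1%nat)) big_bool /= !sum1_card.
- rewrite (eq_bigl (fun p => xpredT p.1 && (p.2 \in orbT p.1))); last first.
    by case=> sb o; rewrite inE.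
  by rewrite -(pair_big_dep xpredT (fun sb o => o \in orbT sb) (fun _ _ => 1%nat)) big_bool /= !sum1_card.
Qed.


Lemma orbF_card sb : (#|orbF sb| * 2 = absz (detK (KB P false)) +
   #|[set w | parcond (KB P false) (cB P false (b2 sb)) w]|)%nat.
Proof. by rewrite /orbF (orbit_card (iotaQ_inv HK0 _)) card_Q (fix_card HK0). Qed.

Lemma orbT_card sb : (#|orbT sb| * 2 = absz (detK (KB P true)) +
   #|[set w | parcond (KB P true) (cB P true (b2 sb)) w]|)%nat.
Proof. by rewrite /orbT (orbit_card (iotaQ_inv HK1 _)) card_Q (fix_card HK1). Qed.

Hypothesis Hodd : modz (pe P) 2 = 1.

Lemma parF : addn #|[set w | parcond (KB P false) (cB P false (b2 false)) w]|
                  #|[set w | parcond (KB P false) (cB P false (b2 true)) w]| =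
             if modz (- pnu P) 2 == 0 then 4%nat else 0%nat.
Proof.
have -> : cB P false (b2 true) = ((cB P false (b2 false)).1 + 1, (cB P false (b2 false)).2).
  by rewrite /cB /b2 /=; congr pair; ring.
have -> : cB P false (b2 false) = ((cB P false (b2 false)).1, (cB P false (b2 false)).2) by [].
rewrite par_sum //= /KB /=; lia.
Qed.

Lemma parT : addn #|[set w | parcond (KB P true) (cB P true (b2 false)) w]|
                  #|[set w | parcond (KB P true) (cB P true (b2 true)) w]| =
             if modz (pnu P) 2 == 0 then 4%nat else 0%nat.
Proof.
have -> : cB P true (b2 true) = ((cB P true (b2 false)).1 + 1, (cB P true (b2 false)).2).
  by rewrite /cB /b2 /=; congr pair; ring.
have -> : cB P true (b2 false) = ((cB P true (b2 false)).1, (cB P true (b2 false)).2) by [].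
rewrite par_sum //= /KB /=; lia.
Qed.

Lemma card_S_val : #|Sset| = addn (addn (absz (detK (KB P false))) (absz (detK (KB P true))))
   (if modz (pnu P) 2 == 0 then 4%nat else 0%nat).
Proof.
have A1 := orbF_card false; have A2 := orbF_card true.
have A3 := orbT_card false; have A4 := orbT_card true.
have B1 := parF; have B2 := parT.
have E : (modz (- pnu P) 2 == 0) = (modz (pnu P) 2 == 0) by lia.
rewrite E in B1; rewrite card_S.
move: A1 A2 A3 A4 B1 B2; case: (modz (pnu P) 2 == 0); lia.
Qed.

Lemma fin_result : reid_classes phi #|Sset| /\ (forall n, reid_classes phi n -> n = #|Sset|).
Proof. exact: (reid_fin HP kap_complete kap_in kap_onto). Qed.

End Fin.

Lemma reid_pos phi n : reid_classes phi n -> (0 < n)%nat.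
Proof.
case=> s [_ [_ [_ Hc]]]; case: (Hc _ (Gamma_emb (v0, false))) => i [Hi _].
by apply: leq_ltn_trans Hi.
Qed.

Lemma final_arith (P : params) : peps P = -1 -> (detN P = 1 \/ detN P = -1) ->
  let n := addn (addn (absz (detK (KB P false))) (absz (detK (KB P true))))
            (if modz (pnu P) 2 == 0 then 4%nat else 0%nat) in (4 %| n)%nat.
Proof.
rewrite /detN /detK /KB /= => He HN.
rewrite He in HN.
move: HN; move: (pa P) (pg P) (pdl P) (pe P) (pnu P) => a g dl e nu HN.
case: (modz nu 2 == 0); lia.
Qed.

Lemma aut_analysis phi (H : is_aut phi) n : reid_classes phi n -> (0 < n)%nat /\ (4 %| n)%nat.
Proof.
move=> Hr; split; first exact: reid_pos Hr.
have [P [HP [Heps HN]]] := structure (PhiOf_maut H).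
case: Heps => He.
- by case: (inf_eps1 HP He Hr).
case: (eqVneq (detK (KB P false)) 0) => HK0.
  by case: (inf_det HP He HK0 Hr).
case: (eqVneq (detK (KB P true)) 0) => HK1.
  by case: (inf_det HP He HK1 Hr).
have Hodd : modz (pe P) 2 = 1.
  move: HN; rewrite /detN He; move: (pa P) (pg P) (pdl P) (pe P) => a g dl e; lia.
have [_ Hu] := fin_result HP He HK0 HK1.
rewrite (Hu _ Hr) (@card_S_val P He HK0 HK1 Hodd).
exact: final_arith.
Qed.

Definition phiOf (F : G -> G) (g : aff) : aff :=
  match excluded_middle_informative (exists x, g = emb x) with
  | left e => emb (F (proj1_sig (constructive_indefinite_description _ e)))
  | right _ => g end.

Lemma phiOf_emb F x : phiOf F (emb x) = emb (F x).
Proof.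
rewrite /phiOf; case: excluded_middle_informative => [e|ne]; last first.
  by exfalso; apply: ne; exists x.
by case: constructive_indefinite_description => y /= /emb_inj <-.
Qed.

Lemma phiOf_aut F : maut F -> is_aut (phiOf F).
Proof.
move=> HF; split; [|split; [|split]].
- by move=> g /Gamma_embP [x ->]; rewrite phiOf_emb; apply: Gamma_emb.
- move=> g h /Gamma_embP [x ->] /Gamma_embP [y ->].
  by rewrite emb_mul !phiOf_emb (F_mul HF) emb_mul.
- move=> g h /Gamma_embP [x ->] /Gamma_embP [y ->]; rewrite !phiOf_emb.
  by move/emb_inj/(F_inj HF) ->.
- move=> g /Gamma_embP [y ->]; case: (F_surj HF y) => x <-.
  by exists (emb x); split; [apply: Gamma_emb | rewrite phiOf_emb].
Qed.

Lemma PhiOf_phiOf F (H : is_aut (phiOf F)) x : PhiOf H x = F x.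
Proof. by apply: emb_inj; rewrite -(PhiOfE H) phiOf_emb. Qed.

Lemma PhiP_hom P x y : PhiP P (gmul x y) = gmul (PhiP P x) (PhiP P y).
Proof.
case: x => z b; case: y => z' b'; rewrite /PhiP /gmul /=; congr pair.
by case: b; case: b' => /=; apply: V_eq => /=; ring.
Qed.

Lemma maut_PhiP P P' : (forall x, PhiP P' (PhiP P x) = x) ->
  (forall x, PhiP P (PhiP P' x) = x) -> maut (PhiP P).
Proof.
move=> H1 H2; split; [exact: PhiP_hom | split].
- by move=> x y E; rewrite -(H1 x) -(H1 y) E.
- by move=> y; exists (PhiP P' y); rewrite H2.
Qed.

Definition Pk (k : int) := Params 0 (-1) k 1 (2 * k - 1) 0 1.
Definition Pk' (k : int) := Params (- k) (-1) k 1 (-1) (-1) 1.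
Definition Pid := Params 1 1 0 0 1 0 0.

Lemma maut_Pk k : maut (PhiP (Pk k)).
Proof.
apply: (@maut_PhiP _ (Pk' k)) => -[z b]; rewrite /PhiP /=; congr pair;
  case: b; apply: V_eq => /=; ring.
Qed.

Lemma maut_Pid : maut (PhiP Pid).
Proof.
apply: (@maut_PhiP _ Pid) => -[z b]; rewrite /PhiP /=; congr pair;
  case: b; apply: V_eq => /=; ring.
Qed.

Theorem proposition5p13 : forall r : option nat, SpecR_Gamma r <-> fourN_inf r.
Proof.
case=> [n|]; split.
- by case=> phi [H Hr]; apply: (aut_analysis H).
- case=> Hn /dvdnP [k Hk].
  have Hk1 : (0 < k)%nat by move: Hn; rewrite Hk; case: k {Hk}.
  have HA := phiOf_aut (maut_Pk k%:Z).
  exists (phiOf (PhiP (Pk k%:Z))); split => //.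
  have HP := PhiOf_phiOf HA.
  have He : peps (Pk k%:Z) = -1 by [].
  have HK0 : detK (KB (Pk k%:Z) false) != 0.
    rewrite /detK /KB /Pk /=; apply/eqP; lia.
  have HK1 : detK (KB (Pk k%:Z) true) != 0.
    rewrite /detK /KB /Pk /=; apply/eqP; lia.
  have Hodd : modz (pe (Pk k%:Z)) 2 = 1 by rewrite /Pk /=; lia.
  have [Hr _] := fin_result HP He HK0 HK1.
  rewrite (@card_S_val (Pk k%:Z) He HK0 HK1 Hodd) in Hr.
  rewrite /reidemeister Hk; move: Hr; congr reid_classes.
  rewrite /detK /KB /Pk /=; lia.
- by [].
- move=> _; have HA := phiOf_aut maut_Pid.
  exists (phiOf (PhiP Pid)); split => //.
  exact: (inf_eps1 (PhiOf_phiOf HA)).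
Qed.
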